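(* Assume every $f_i$ ($i=1,\dots,q$) is Lipschitz continuous with respect to the continuous variables, and consider the bound-constrained problem (PB): minimize $F(x)=(f_1(x),\dots,f_q(x))^\top$ subject to $x\in X\cap\mathcal Z$. If $x^\star\in X\cap\mathcal Z$ is Pareto-Clarke-Jahn stationary w.r.t. the continuous variables for (PB), then $x^\star$ is Pareto-Clarke stationary w.r.t. the continuous variables for (PB).
   Context: Fix integers $n,q\ge1$. Let $\{1,\dots,n\}=I^c\cup I^z$ with $I^c\cap I^z=\emptyset$ and $I^c,I^z\neq\emptyset$; for $x\in\mathbb R^n$ write $x_c=(x_i)_{i\in I^c}$, $x_z=(x_i)_{i\in I^z}$. Let $l,u\in\mathbb R^n$ with $l_i<u_i$, and $l_i,u_i\in\mathbb Z$ for $i\in I^z$. $X=\{x: l_i\le x_i\le u_i\ \forall i\}$, $\mathcal Z=\{x: x_i\in\mathbb Z\ \forall i\in I^z\}$. A function $h:\mathbb R^n\to\mathbb R$ is Lipschitz continuous with respect to the continuous variables if there is $L_h$ with $|h(x)-h(y)|\le L_h\|x-y\|$ whenever $x_i=y_i$ for all $i\in I^z$. For such $h$ and $s\in\mathbb R^n$ with $s_i=0$ ($i\in I^z$): $h^{Cl}_c(x;s)=\limsup_{y_c\to x_c,\ y_z=x_z,\ t\downarrow0}\frac{h(y+ts)-h(y)}{t}$, and $\partial_c h(x)=\{v\in\mathbb R^n: v_i=0\ \forall i\in I^z,\ h^{Cl}_c(x;s)\ge s^\top v\ \forall s \text{ with } s_i=0\ \forall i\in I^z\}$. For $x\in X\cap\mathcal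 Z$ and $d\in D^c(x)$, the Clarke-Jahn generalized directional derivative is $h^\circ_c(x;d)=\limsup\frac{h(y+td)-h(y)}{t}$, the limsup taken over $y_c\to x_c$, $y_z=x_z$, $y\in X\cap\mathcal Z$, $t\downarrow0$, $y+td\in X\cap\mathcal Z$. For $x\in X\cap\mathcal Z$, $D^c(x)=\{s\in\mathbb R^n: s_i=0\ (i\in I^z);\ s_i\ge 0\ (i\in I^c,\ x_i=l_i);\ s_i\le 0\ (i\in I^c,\ x_i=u_i);\ s_i\in\mathbb R\ (i\in I^c,\ l_i<x_i<u_i)\}$. A point $x^\star\in X\cap\mathcal Z$ is Pareto-Clarke-Jahn stationary w.r.t. the continuous variables for (PB) if for every $d\in D^c(x^\star)$ there is $j_d\in\{1,\dots,q\}$ with $(f_{j_d})^\circ_c(x^\star;d)\ge0$. It is Pareto-Clarke stationary w.r.t. the continuous variables for (PB) if there exist $\sigma\in\mathbb R^q$, $\sigma\ge0$ componentwise, $\sigma\ne0$, and $\bar\xi\in\sum_{i=1}^q\sigma_i\partial_c f_i(x^\star)$ (Minkowski sum) with $\bar\xi^\top d\ge0$ for all $d\in D^c(x^\star)$. *)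

(* Defs.v *)
From Stdlib Require Import Reals ZArith.
From Coquelicot Require Import Coquelicot.
From mathcomp Require Import ssreflect ssrfun ssrbool eqtype ssrnat seq fintype bigop.
Set Implicit Arguments. Unset Strict Implicit.

Open Scope R_scope.

Definition vec (n : nat) := 'I_n -> R.

Definition dot n (x y : vec n) : R := \big[Rplus/0]_(i < n) (x i * y i).
Definition vadd n (x y : vec n) : vec n := fun i => x i + y i.
Definition vsub n (x y : vec n) : vec n := fun i => x i - y i.
Definition vscale n (t : R) (x : vec n) : vec n := fun i => t * x i.
Definition norm2 n (x : vec n) : R := sqrt (dot x x).

(* The partition {1..n} = I^c ∪ I^z is encoded by isz : 'I_n -> bool,
   with I^z = {i | isz i} and I^c = {i | ~~ isz i}. *)

Definition zero_on_z n (isz : 'I_n -> bool) (s : vec n) : Prop :=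
  forall i, isz i -> s i = 0.

Definition same_z n (isz : 'I_n -> bool) (x y : vec n) : Prop :=
  forall i, isz i -> y i = x i.

Definition inX n (l u x : vec n) : Prop := forall i, l i <= x i <= u i.
Definition inZ n (isz : 'I_n -> bool) (x : vec n) : Prop :=
  forall i, isz i -> exists k : Z, x i = IZR k.

Definition lipschitz_c n (isz : 'I_n -> bool) (h : vec n -> R) : Prop :=
  exists Lh : R, forall x y : vec n, same_z isz x y ->
    Rabs (h x - h y) <= Lh * norm2 (vsub x y).

(* limsup of g(y,t) as y -> x (subject to the side condition P y t) and t ↓ 0:
   inf_{eps>0} sup { g y t | P y t, ||y - x|| < eps, 0 < t < eps } *)
Definition limsup_yt n (P : vec n -> R -> Prop) (x : vec n)
    (g : vec n -> R -> R) : Rbar :=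
  Rbar_glb (fun r => exists eps : R, 0 < eps /\
    r = Rbar_lub (fun s => exists (y : vec n) (t : R),
          P y t /\ norm2 (vsub y x) < eps /\ 0 < t < eps /\ s = Rbar.Finite (g y t))).

Definition clarke_c n (isz : 'I_n -> bool) (h : vec n -> R) (x s : vec n) : Rbar :=
  limsup_yt (fun y _ => same_z isz x y) x
            (fun y t => (h (vadd y (vscale t s)) - h y) / t).

Definition subdiff_c n (isz : 'I_n -> bool) (h : vec n -> R) (x v : vec n) : Prop :=
  zero_on_z isz v /\
  forall s : vec n, zero_on_z isz s ->
    Rbar_le (Rbar.Finite (dot s v)) (clarke_c isz h x s).

Definition clarke_jahn_c n (isz : 'I_n -> bool) (l u : vec n)
    (h : vec n -> R) (x d : vec n) : Rbar :=
  limsup_yt (fun y t => same_z isz x y /\ inX l u y /\ inZ isz y /\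
                        inX l u (vadd y (vscale t d)) /\
                        inZ isz (vadd y (vscale t d))) x
            (fun y t => (h (vadd y (vscale t d)) - h y) / t).

Definition Dc n (isz : 'I_n -> bool) (l u x s : vec n) : Prop :=
  forall i,
    (isz i -> s i = 0) /\
    (~~ isz i -> (x i = l i -> 0 <= s i) /\ (x i = u i -> s i <= 0)).

Definition pareto_clarke_jahn_stationary_c n q (isz : 'I_n -> bool)
    (l u : vec n) (f : 'I_q -> vec n -> R) (xs : vec n) : Prop :=
  forall d : vec n, Dc isz l u xs d ->
    exists j : 'I_q, Rbar_le (Rbar.Finite 0) (clarke_jahn_c isz l u (f j) xs d).

Definition pareto_clarke_stationary_c n q (isz : 'I_n -> bool)
    (l u : vec n) (f : 'I_q -> vec n -> R) (xs : vec n) : Prop :=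
  exists sigma : 'I_q -> R,
    (forall i, 0 <= sigma i) /\ (exists i, sigma i <> 0) /\
    exists (v : 'I_q -> vec n) (xi : vec n),
      (forall i, subdiff_c isz (f i) xs (v i)) /\
      (forall k, xi k = \big[Rplus/0]_(i < q) (sigma i * v i k)) /\
      (forall d : vec n, Dc isz l u xs d -> 0 <= dot xi d).

(* Main.v *)
Require Import Defs.
From Stdlib Require Import Reals ZArith Lra.
From Coquelicot Require Import Coquelicot.
From mathcomp Require Import ssreflect ssrfun ssrbool eqtype ssrnat seq fintype bigop.
From HB Require Import structures.
From Stdlib Require Import FunctionalExtensionality Classical IndefiniteDescription.
Open Scope R_scope.
Set Implicit Arguments. Unset Strict Implicit.

HB.instance Definition _ := Monoid.isComLaw.Build R 0 Rplus (fun a b c => esym (Rplus_assoc a b c)) Rplus_comm Rplus_0_l.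
HB.instance Definition _ := Monoid.isMulLaw.Build R 0 Rmult Rmult_0_l Rmult_0_r.
HB.instance Definition _ := Monoid.isAddLaw.Build R Rmult Rplus Rmult_plus_distr_r Rmult_plus_distr_l.

Lemma sumR_le (I : Type) (r : seq I) (P : pred I) (F G : I -> R) :
  (forall i, P i -> F i <= G i) ->
  \big[Rplus/0]_(i <- r | P i) F i <= \big[Rplus/0]_(i <- r | P i) G i.
Proof.
move=> H; apply: (big_ind2 (fun a b => a <= b)); [lra | move=> *; lra | exact: H].
Qed.

Lemma sumR_ge0 (I : Type) (r : seq I) (P : pred I) (F : I -> R) :
  (forall i, P i -> 0 <= F i) -> 0 <= \big[Rplus/0]_(i <- r | P i) F i.
Proof.
move=> H; apply: (big_ind (fun a => 0 <= a)); [lra | move=> *; lra | exact: H].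
Qed.

Lemma sumR_distr (I : Type) (r : seq I) (P : pred I) a (F : I -> R) :
  a * \big[Rplus/0]_(i <- r | P i) F i = \big[Rplus/0]_(i <- r | P i) (a * F i).
Proof. exact: big_distrr. Qed.

Lemma sumR_split (I : Type) (r : seq I) (P : pred I) (F G : I -> R) :
  \big[Rplus/0]_(i <- r | P i) (F i + G i) =
  \big[Rplus/0]_(i <- r | P i) F i + \big[Rplus/0]_(i <- r | P i) G i.
Proof. exact: big_split. Qed.

Lemma sumR_opp (I : Type) (r : seq I) (P : pred I) (F : I -> R) :
  \big[Rplus/0]_(i <- r | P i) (- F i) = - \big[Rplus/0]_(i <- r | P i) F i.
Proof.
symmetry; apply: (big_morph Ropp Ropp_plus_distr Ropp_0).
Qed.

Lemma term_le_sum (I : finType) (F : I -> R) j :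
  (forall i, 0 <= F i) -> F j <= \big[Rplus/0]_(i : I) F i.
Proof.
move=> H; rewrite (bigD1 j) //=.
have := @sumR_ge0 I (index_enum I) (fun i => i != j) F (fun i _ => H i); lra.
Qed.

Lemma norm2_ge_coord n (v : vec n) i : Rabs (v i) <= norm2 v.
Proof.
rewrite /norm2 /dot -sqrt_Rsqr_abs; apply: sqrt_le_1_alt.
rewrite /Rsqr. have := @term_le_sum _ (fun k => v k * v k) i. move=> H; apply: H => k; exact: Rle_0_sqr.
Qed.

Lemma norm2_le_sum n (v : vec n) : norm2 v <= \big[Rplus/0]_(i < n) Rabs (v i).
Proof.
rewrite /norm2 /dot.
have [H1 H2] : \big[Rplus/0]_(i < n) (v i * v i) <=
   (\big[Rplus/0]_(i < n) Rabs (v i)) * (\big[Rplus/0]_(i < n) Rabs (v i))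
   /\ 0 <= \big[Rplus/0]_(i < n) Rabs (v i).
  apply: (big_rec2 (fun a b => a <= b * b /\ 0 <= b)); first lra.
  move=> i a b _ [h1 h2]; have h3 := Rabs_pos (v i).
  have h4 : v i * v i = Rabs (v i) * Rabs (v i).
    by rewrite -Rabs_mult Rabs_right //; apply: Rle_ge; apply: Rle_0_sqr.
  split; nra.
rewrite -(sqrt_square (\big[Rplus/0]_(i < n) Rabs (v i))) //.
exact: sqrt_le_1_alt.
Qed.

Lemma iter_plus_INR (c : R) k : iter k (Rplus c) 0 = INR k * c.
Proof. elim: k => [|k IH]; first (simpl; ring). rewrite S_INR /= IH; ring. Qed.

Lemma sum_abs_le_norm n (v : vec n) :
  \big[Rplus/0]_(i < n) Rabs (v i) <= INR n * norm2 v.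
Proof.
have H := @sumR_le _ (index_enum 'I_n) xpredT (fun i => Rabs (v i)) (fun _ => norm2 v)
  (fun i _ => @norm2_ge_coord n v i).
apply: Rle_trans H _.
rewrite big_const_ord iter_plus_INR; lra.
Qed.


Definition fdot (I : finType) (a z : I -> R) := \big[Rplus/0]_(i : I) (a i * z i).

Definition sublin (I : finType) (P : (I -> R) -> R) :=
  (forall v w, P (fun i => v i + w i) <= P v + P w) /\
  (forall t v, 0 < t -> P (fun i => t * v i) = t * P v).

Definition good (I : finType) (P : (I -> R) -> R) (G : (I -> R) -> R -> Prop) :=
  [/\ G (fun _ => 0) 0,
   (forall v r w s, G v r -> G w s -> G (fun i => v i + w i) (r + s)),
   (forall v r t, G v r -> G (fun i => t * v i) (t * r)),
   (forall r, G (fun _ => 0) r -> r = 0) &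
   (forall v r, G v r -> r <= P v)].

Arguments fdot {I}.
Arguments sublin {I}.
Arguments good {I}.

Ltac fext := apply: functional_extensionality => ?.

Lemma hb_step (I : finType) (P : (I -> R) -> R) (G : (I -> R) -> R -> Prop) (x : I -> R) :
  sublin P -> good P G ->
  exists G', good P G' /\ (forall v r, G v r -> G' v r) /\ exists c, G' x c.
Proof.
move=> [Psub Phom] [G0 Gadd Gsc Gfun Gdom].
case: (classic (exists c, G x c)) => [Hx|Hx].
  exists G; split; first by split.
  by split.
pose A r' := exists v r, G v r /\ r' = r - P (fun i => v i - x i).
have key : forall v r w s, G v r -> G w s -> r - P (fun i => v i - x i) <= P (fun i => w i + x i) - s.
  move=> v r w s Hv Hw.
  have := Gdom _ _ (Gadd _ _ _ _ Hv Hw).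
  have -> : (fun i => v i + w i) = (fun i => (v i - x i) + (w i + x i)) by fext; ring.
  have := Psub (fun i => v i - x i) (fun i => w i + x i); lra.
have [c [Hub Hlub]] : {m | is_lub A m}.
  apply: completeness.
  exists (P (fun i => 0 + x i) - 0) => r' [v [r [Hv ->]]]; exact: key Hv G0.
  exists (0 - P (fun i => 0 - x i)); by exists (fun _ => 0), 0.
have Hc1 : forall v r, G v r -> r - P (fun i => v i - x i) <= c.
  by move=> v r Hv; apply: Hub; exists v, r.
have Hc2 : forall w s, G w s -> c <= P (fun i => w i + x i) - s.
  move=> w s Hw; apply: Hlub => r' [v [r [Hv ->]]]; exact: key Hv Hw.
exists (fun y rho => exists v r t, G v r /\ y = (fun i => v i + t * x i) /\ rho = r + t * c).
split; [split|split].
- exists (fun _ => 0), 0, 0; split => //; split; [fext; ring | ring].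
- move=> ? ? ? ? [v1 [r1 [t1 [H1 [-> ->]]]]] [v2 [r2 [t2 [H2 [-> ->]]]]].
  exists (fun i => v1 i + v2 i), (r1 + r2), (t1 + t2); split; first exact: Gadd.
  split; [fext; ring | ring].
- move=> ? ? tau [v1 [r1 [t1 [H1 [-> ->]]]]].
  exists (fun i => tau * v1 i), (tau * r1), (tau * t1); split; first exact: Gsc.
  split; [fext; ring | ring].
- move=> rho [v [r [t [Hv [Heq ->]]]]].
  case: (Req_dec t 0) => [Ht|Ht].
    subst t.
    have Hv0 : v = (fun _ => 0).
      fext; match goal with |- v ?i = _ => have := f_equal (fun g => g i) Heq end; simpl; lra.
    subst v; rewrite (Gfun _ Hv); ring.
  exfalso; apply: Hx; exists ((-1/t) * r).
  have -> : x = (fun i => (-1/t) * v i).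
    fext; match goal with |- x ?i = _ => have := f_equal (fun g => g i) Heq end; simpl => E.
    field_simplify; [|exact: Ht]. apply: (Rmult_eq_reg_l t); last exact: Ht. field_simplify; lra.
  exact: Gsc.
- move=> ? ? [v [r [t [Hv [-> ->]]]]].
  case: (Rtotal_order t 0) => [Ht|[Ht|Ht]].
  + pose tau := - t.
    have Htau : 0 < tau by rewrite /tau; lra.
    have H1 := Hc1 _ _ (Gsc _ _ (/tau) Hv).
    have -> : (fun i => v i + t * x i) = (fun i => tau * ((/tau * v i) - x i)).
      fext; rewrite /tau; field; lra.
    rewrite Phom //.
    have E : r = tau * (/tau * r) by field; lra.
    have E2 : t * c = - (tau * c) by rewrite /tau; ring.
    rewrite E2 {1}E. have := Rmult_le_compat_l tau _ _ (Rlt_le _ _ Htau) H1. lra.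
  + subst t. have -> : (fun i => v i + 0 * x i) = v by fext; ring.
    have := Gdom _ _ Hv; lra.
  + have H1 := Hc2 _ _ (Gsc _ _ (/t) Hv).
    have -> : (fun i => v i + t * x i) = (fun i => t * ((/t * v i) + x i)).
      fext; field; lra.
    rewrite Phom //.
    have E : r = t * (/t * r) by field; lra.
    rewrite {1}E. have := Rmult_le_compat_l t _ _ (Rlt_le _ _ Ht) H1. lra.
- move=> v r Hv; exists v, r, 0; split => //; split; [fext; ring | ring].
- exists c, (fun _ => 0), 0, 1; split => //; split; [fext; ring | ring].
Qed.

Definition evec (I : finType) (i : I) : I -> R := fun j => if j == i then 1 else 0.

Arguments evec {I}.

Lemma hb (I : finType) (P : (I -> R) -> R) (G0 : (I -> R) -> R -> Prop) :
  sublin P -> good P G0 ->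
  exists a : I -> R, (forall z, fdot a z <= P z) /\ (forall v r, G0 v r -> fdot a v = r).
Proof.
move=> HP HG0.
have Hl : forall l : seq I, exists G, good P G /\ (forall v r, G0 v r -> G v r) /\
     (forall i, i \in l -> exists c, G (evec i) c).
  elim=> [|i l [G [HG [H0 Hl]]]].
    by exists G0; split => //; split.
  have [G' [HG' [HGG' [c Hc]]]] := @hb_step I P G (evec i) HP HG.
  exists G'; split => //; split; first by move=> v r /H0 /HGG'.
  move=> j; rewrite in_cons => /orP [/eqP -> | Hj]; first by exists c.
  by have [c' Hc'] := Hl j Hj; exists c'; apply: HGG'.
have [G [HG [H0 Hall]]] := Hl (enum I).
have Hc : forall i, exists c, G (evec i) c by move=> i; apply: Hall; rewrite mem_enum.
have [c Hcf] := functional_choice _ Hc.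
case: HG => [G0' Gadd Gsc Gfun Gdom].
have Hsum : forall z (l : seq I), G (fun j => \big[Rplus/0]_(i <- l) (z i * evec i j))
                                   (\big[Rplus/0]_(i <- l) (c i * z i)).
  move=> z; elim=> [|i l IH].
    have -> : (fun j => \big[Rplus/0]_(i <- [::]) (z i * evec i j)) = (fun _ => 0).
      by fext; rewrite big_nil.
    by rewrite big_nil.
  have -> : (fun j => \big[Rplus/0]_(k <- i :: l) (z k * evec k j)) =
            (fun j => z i * evec i j + \big[Rplus/0]_(k <- l) (z k * evec k j)).
    by fext; rewrite big_cons.
  rewrite big_cons; apply: Gadd => //.
  rewrite Rmult_comm; exact: Gsc.
have Hz : forall z, G z (fdot c z).
  move=> z; have := Hsum z (index_enum I).
  have -> : (fun j => \big[Rplus/0]_(i <- index_enum I) (z i * evec i j)) = z.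
    apply: functional_extensionality => j; rewrite (bigD1 j) //= /evec eqxx big1 => [|i Hi]; first ring.
    by rewrite eq_sym (negbTE Hi); ring.
  by [].
exists c; split; first by move=> z; apply: Gdom.
move=> v r Hv.
have H := Gadd _ _ _ _ (H0 _ _ Hv) (Gsc _ _ (-1) (Hz v)).
have E : (fun i => v i + -1 * v i) = (fun _ => 0) by fext; ring.
rewrite E in H.
have := Gfun _ H; lra.
Qed.


Notation Fin := Rbar.Finite.

Lemma lubP (E : Rbar -> Prop) : Rbar_is_lub E (Rbar_lub E).
Proof. exact: (proj2_sig (Rbar_ex_lub E)). Qed.
Lemma glbP (E : Rbar -> Prop) : Rbar_is_glb E (Rbar_glb E).
Proof. exact: (proj2_sig (Rbar_ex_glb E)). Qed.

Lemma rbar_fin a b r : Rbar_le (Fin a) r -> Rbar_le r (Fin b) -> r = Fin (real r).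
Proof. by case: r. Qed.

Definition Qq n (h : vec n -> R) (s y : vec n) (t : R) := (h (vadd y (vscale t s)) - h y) / t.
Definition Eset n (isz : 'I_n -> bool) h (x s : vec n) eps : Rbar -> Prop :=
  fun r => exists y t, same_z isz x y /\ norm2 (vsub y x) < eps /\ 0 < t < eps /\
    r = Fin (Qq h s y t).
Definition Mset n (isz : 'I_n -> bool) h (x s : vec n) : Rbar -> Prop :=
  fun r => exists eps, 0 < eps /\ r = Rbar_lub (Eset isz h x s eps).

Lemma clarke_eq n (isz : 'I_n -> bool) h x s : clarke_c isz h x s = Rbar_glb (Mset isz h x s).
Proof. reflexivity. Qed.

Lemma norm2_ge0 n (v : vec n) : 0 <= norm2 v.
Proof. exact: sqrt_pos. Qed.

Lemma norm2_vsub_self n (x : vec n) : norm2 (vsub x x) = 0.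
Proof.
apply: Rle_antisym; last exact: norm2_ge0.
apply: Rle_trans (norm2_le_sum _) _.
rewrite big1 => [|i _]; first lra.
rewrite /vsub Rminus_diag; exact: Rabs_R0.
Qed.

Lemma Qbound n (isz : 'I_n -> bool) h s :
  lipschitz_c isz h -> zero_on_z isz s ->
  exists K, 0 <= K /\ forall y t, 0 < t -> Rabs (Qq h s y t) <= K.
Proof.
move=> [L HL] Hs.
exists (Rabs L * \big[Rplus/0]_(i < n) Rabs (s i)); split.
  apply: Rmult_le_pos; first exact: Rabs_pos.
  by apply: sumR_ge0 => i _; apply: Rabs_pos.
move=> y t Ht.
have Hz : same_z isz (vadd y (vscale t s)) y.
  by move=> i Hi; rewrite /vadd /vscale Hs // Rmult_0_r Rplus_0_r.
have H1 := HL _ _ Hz.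
have E : vsub (vadd y (vscale t s)) y = vscale t s.
  by apply: functional_extensionality => i; rewrite /vsub /vadd /vscale; ring.
rewrite E in H1.
have H2 := norm2_le_sum (vscale t s).
have E2 : \big[Rplus/0]_(i < n) Rabs (vscale t s i) = t * \big[Rplus/0]_(i < n) Rabs (s i).
  rewrite sumR_distr; apply: eq_bigr => i _; rewrite /vscale Rabs_mult Rabs_right //; lra.
rewrite E2 in H2.
have H3 : L * norm2 (vscale t s) <= Rabs L * (t * \big[Rplus/0]_(i < n) Rabs (s i)).
  apply: Rle_trans (Rmult_le_compat_r _ _ _ (norm2_ge0 _) (Rle_abs L)) _.
  apply: Rmult_le_compat_l => //; exact: Rabs_pos.
rewrite /Qq Rabs_div; last lra.
rewrite (Rabs_right t); last lra.
apply: (Rmult_le_reg_r t) => //.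
rewrite /Rdiv Rmult_assoc Rinv_l; last lra.
lra.
Qed.

Definition gval n (isz : 'I_n -> bool) h (x s : vec n) := real (clarke_c isz h x s).

Lemma clarke_char n (isz : 'I_n -> bool) h (x s : vec n) :
  lipschitz_c isz h -> zero_on_z isz s ->
  let g := gval isz h x s in
  clarke_c isz h x s = Fin g /\
  (forall eta, 0 < eta -> exists eps, 0 < eps /\ forall y t, same_z isz x y ->
      norm2 (vsub y x) < eps -> 0 < t < eps -> Qq h s y t <= g + eta) /\
  (forall eps eta, 0 < eps -> 0 < eta -> exists y t, same_z isz x y /\
      norm2 (vsub y x) < eps /\ 0 < t < eps /\ g - eta < Qq h s y t).
Proof.
move=> Hl Hs g.
have [K [HK HQ]] := Qbound Hl Hs.
have Hne : forall eps, 0 < eps -> Eset isz h x s eps (Fin (Qq h s x (eps/2))).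
  move=> eps He; exists x, (eps/2); split; first by move=> i.
  rewrite norm2_vsub_self; repeat split => //; lra.
have HubE : forall eps, Rbar_le (Rbar_lub (Eset isz h x s eps)) (Fin K).
  move=> eps; apply: (proj2 (lubP _)) => r [y [t [_ [_ [Ht ->]]]]] /=.
  have := HQ y t (proj1 Ht); move/Rabs_le_between => ?; lra.
have HlbE : forall eps, 0 < eps -> Rbar_le (Fin (-K)) (Rbar_lub (Eset isz h x s eps)).
  move=> eps He; apply: Rbar_le_trans (proj1 (lubP _) _ (Hne eps He)) => /=.
  have := HQ x (eps/2); move=> H; have := H ltac:(lra); move/Rabs_le_between => ?; lra.
have Hfin : clarke_c isz h x s = Fin g.
  rewrite /g /gval; apply: (@rbar_fin (-K) K); rewrite clarke_eq.
  - apply: (proj2 (glbP _)) => r [eps [He ->]]; exact: HlbE.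
  - apply: Rbar_le_trans (HubE 1).
    apply: (proj1 (glbP _)); exists 1; split => //; lra.
have HG := glbP (Mset isz h x s).
rewrite -clarke_eq Hfin in HG.
split => //; split.
- move=> eta Heta.
  case: (classic (exists eps, 0 < eps /\ Rbar_lt (Rbar_lub (Eset isz h x s eps)) (Fin (g + eta))))
    => [[eps [He Hlt]] | Hn].
    exists eps; split => // y t Hy Hyn Ht.
    have H1 : Rbar_le (Fin (Qq h s y t)) (Rbar_lub (Eset isz h x s eps)).
      by apply: (proj1 (lubP _)); exists y, t.
    have := Rbar_le_lt_trans _ _ _ H1 Hlt => /= ?; lra.
  exfalso.
  have : Rbar_le (Fin (g + eta)) (Fin g).
    apply: (proj2 HG) => r [eps [He ->]].
    apply: Rbar_not_lt_le => Hlt; apply: Hn; exists eps; split => //.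
  rewrite /=; lra.
- move=> eps eta He Heta.
  apply: NNPP => Hn; exfalso.
  have H1 : Rbar_le (Rbar_lub (Eset isz h x s eps)) (Fin (g - eta)).
    apply: (proj2 (lubP _)) => r [y [t [Hy [Hyn [Ht ->]]]]] /=.
    apply: Rnot_lt_le => Hlt; apply: Hn; exists y, t; repeat split => //; lra.
  have H2 : Rbar_le (Fin g) (Rbar_lub (Eset isz h x s eps)).
    by apply: (proj1 HG); exists eps.
  have := Rbar_le_trans _ _ _ H2 H1; rewrite /=; lra.
Qed.

Lemma le_eps_K a b K : 0 < K -> (forall eta, 0 < eta -> a < b + K * eta) -> a <= b.
Proof.
move=> HK H; apply: Rle_plus_epsilon => e He.
have := H (e / K) ltac:(apply: Rdiv_lt_0_compat => //).
have -> : K * (e / K) = e by field; lra.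
lra.
Qed.

Lemma zS_scale n (isz : 'I_n -> bool) t s : zero_on_z isz s -> zero_on_z isz (vscale t s).
Proof. by move=> H i Hi; rewrite /vscale H // Rmult_0_r. Qed.
Lemma zS_add n (isz : 'I_n -> bool) s w : zero_on_z isz s -> zero_on_z isz w -> zero_on_z isz (vadd s w).
Proof. by move=> H1 H2 i Hi; rewrite /vadd H1 // H2 // Rplus_0_r. Qed.

Lemma g_hom_le n (isz : 'I_n -> bool) h (x s : vec n) tau :
  lipschitz_c isz h -> zero_on_z isz s -> 0 < tau ->
  gval isz h x (vscale tau s) <= tau * gval isz h x s.
Proof.
move=> Hl Hs Ht.
have [_ [C1 _]] := clarke_char x Hl Hs.
have [_ [_ C2]] := clarke_char x Hl (zS_scale tau Hs).
apply: (@le_eps_K _ _ (tau + 1)); first lra.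
move=> eta He.
have [eps [Heps H1]] := C1 eta He.
have Heps' : 0 < Rmin eps (eps / tau) by apply: Rmin_pos => //; apply: Rdiv_lt_0_compat.
have [y [t [Hy [Hyn [Htt H2]]]]] := C2 _ _ Heps' He.
have Hm1 := Rmin_l eps (eps / tau).
have Hm2 := Rmin_r eps (eps / tau).
have Htau : t * tau < eps.
  have : t < eps / tau by lra.
  move=> H; apply: (Rmult_lt_reg_r (/ tau)); first by apply: Rinv_0_lt_compat.
  rewrite Rmult_assoc Rinv_r; last lra. rewrite Rmult_1_r; exact: H.
have H3 := H1 y (t * tau) Hy ltac:(lra) ltac:(split; [nra|exact: Htau]).
have E : Qq h (vscale tau s) y t = tau * Qq h s y (t * tau).
  rewrite /Qq.
  have -> : vadd y (vscale t (vscale tau s)) = vadd y (vscale (t * tau) s).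
    by apply: functional_extensionality => i; rewrite /vadd /vscale; ring.
  field; lra.
rewrite E in H2.
have := Rmult_le_compat_l tau _ _ (Rlt_le _ _ Ht) H3.
lra.
Qed.

Lemma g_hom n (isz : 'I_n -> bool) h (x s : vec n) tau :
  lipschitz_c isz h -> zero_on_z isz s -> 0 < tau ->
  gval isz h x (vscale tau s) = tau * gval isz h x s.
Proof.
move=> Hl Hs Ht; apply: Rle_antisym; first exact: g_hom_le.
have H := @g_hom_le n isz h x (vscale tau s) (/ tau) Hl (zS_scale tau Hs) (Rinv_0_lt_compat _ Ht).
have E : vscale (/ tau) (vscale tau s) = s.
  by apply: functional_extensionality => i; rewrite /vscale; field; lra.
rewrite E in H.
have := Rmult_le_compat_l tau _ _ (Rlt_le _ _ Ht) H.
have -> : tau * (/ tau * gval isz h x (vscale tau s)) = gval isz h x (vscale tau s) by field; lra.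
lra.
Qed.

Lemma g_sub n (isz : 'I_n -> bool) h (x s1 s2 : vec n) :
  lipschitz_c isz h -> zero_on_z isz s1 -> zero_on_z isz s2 ->
  gval isz h x (vadd s1 s2) <= gval isz h x s1 + gval isz h x s2.
Proof.
move=> Hl H1s H2s.
have [_ [C1a _]] := clarke_char x Hl H1s.
have [_ [C1b _]] := clarke_char x Hl H2s.
have [_ [_ C2]] := clarke_char x Hl (zS_add H1s H2s).
apply: (@le_eps_K _ _ 3); first lra.
move=> eta He.
have [e1 [He1 Ha]] := C1a eta He.
have [e2 [He2 Hb]] := C1b eta He.
pose A := \big[Rplus/0]_(i < n) Rabs (s1 i).
pose N := INR n.
have HA : 0 <= A by apply: sumR_ge0 => i _; apply: Rabs_pos.
have HN : 0 <= N by apply: pos_INR.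
have HD : 0 < N + A + 1 by lra.
pose e := Rmin e1 (e2 / (N + A + 1)).
have Hepos : 0 < e by apply: Rmin_pos => //; apply: Rdiv_lt_0_compat.
have Hm1 : e <= e1 by apply: Rmin_l.
have Hm2 : e <= e2 / (N + A + 1) by apply: Rmin_r.
have Hm3 : e * (N + A + 1) <= e2.
  have := Rmult_le_compat_r (N + A + 1) _ _ (Rlt_le _ _ HD) Hm2.
  have -> : e2 / (N + A + 1) * (N + A + 1) = e2 by field; lra.
  done.
have [y [t [Hy [Hyn [Ht H2]]]]] := C2 _ _ Hepos He.
pose y' := vadd y (vscale t s1).
have Hy' : same_z isz x y'.
  by move=> i Hi; rewrite /y' /vadd /vscale H1s // Rmult_0_r Rplus_0_r; apply: Hy.
have Hy'n : norm2 (vsub y' x) < e2.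
  apply: Rle_lt_trans (norm2_le_sum _) _.
  have S1 : \big[Rplus/0]_(i < n) Rabs (vsub y' x i) <=
            \big[Rplus/0]_(i < n) (Rabs (vsub y x i) + t * Rabs (s1 i)).
    apply: sumR_le => i _; rewrite /y' /vsub /vadd /vscale.
    have -> : y i + t * s1 i - x i = (y i - x i) + t * s1 i by ring.
    apply: Rle_trans (Rabs_triang _ _) _.
    rewrite Rabs_mult (Rabs_right t); [lra | lra].
  rewrite sumR_split -sumR_distr in S1.
  have S2 := sum_abs_le_norm (vsub y x).
  rewrite -/N -/A in S1 S2.
  have S1' : \big[Rplus/0]_(i < n) Rabs (vsub y' x i) <= \big[Rplus/0]_(i < n) Rabs (vsub y x i) + t * A := S1.
  have Hm4 : e * N + e * A + e <= e2 by rewrite -[X in _ <= X]Rmult_1_r; nra.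
  clear S1.
  have : N * norm2 (vsub y x) <= N * e by apply: Rmult_le_compat_l => //; lra.
  have : t * A <= e * A by apply: Rmult_le_compat_r => //; lra.
  move=> *; nra.
have Hq1 := Ha y t Hy ltac:(lra) ltac:(lra).
have Hq2 : Qq h s2 y' t <= gval isz h x s2 + eta.
  apply: Hb => //; split; [lra|].
  have : e <= e2 by nra.
  lra.
have E : Qq h (vadd s1 s2) y t = Qq h s2 y' t + Qq h s1 y t.
  rewrite /Qq.
  have -> : vadd y (vscale t (vadd s1 s2)) = vadd y' (vscale t s2).
    by apply: functional_extensionality => i; rewrite /y' /vadd /vscale; ring.
  rewrite /y'; field; lra.
rewrite E in H2.
lra.
Qed.

Lemma cj_le_clarke n (isz : 'I_n -> bool) (l u : vec n) h (x d : vec n) :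
  Rbar_le (clarke_jahn_c isz l u h x d) (clarke_c isz h x d).
Proof.
rewrite clarke_eq /clarke_jahn_c /limsup_yt.
apply: (proj2 (glbP _)) => r [eps [He ->]].
set F := (fun r0 : Rbar => exists eps0 : R, _).
apply: Rbar_le_trans (proj1 (glbP F) _ _) _.
  by exists eps; split; [exact: He| reflexivity].
apply: Rbar_lub_subset => s [y [t [[Hy _] [Hyn [Ht ->]]]]].
by exists y, t.
Qed.


Definition Rinf (T : R -> Prop) : R := real (Glb_Rbar T).

Lemma Rinf_spec (T : R -> Prop) b r0 : T r0 -> (forall r, T r -> b <= r) ->
  (forall r, T r -> Rinf T <= r) /\ (forall c, (forall r, T r -> c <= r) -> c <= Rinf T).
Proof.
move=> H0 Hb.
have [Hlb Hgl] := Glb_Rbar_correct T.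
have E : Glb_Rbar T = Fin (real (Glb_Rbar T)).
  apply: (@rbar_fin b r0).
  - by apply: Hgl => r Hr; apply: Hb.
  - exact: Hlb.
rewrite /Rinf; split.
- by move=> r Hr; have := Hlb r Hr; rewrite E.
- by move=> c Hc; have := Hgl (Fin c) Hc; rewrite E.
Qed.

Lemma hom_from_le (I : finType) (P : (I -> R) -> R) :
  (forall t v, 0 < t -> P (fun i => t * v i) <= t * P v) ->
  forall t v, 0 < t -> P (fun i => t * v i) = t * P v.
Proof.
move=> H t v Ht; apply: Rle_antisym; first exact: H.
have H2 := H (/ t) (fun i => t * v i) (Rinv_0_lt_compat _ Ht).
have E : (fun i => / t * (t * v i)) = v.
  by apply: functional_extensionality => i; field; lra.
rewrite E in H2.
have := Rmult_le_compat_l t _ _ (Rlt_le _ _ Ht) H2.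
have -> : t * (/ t * P (fun i => t * v i)) = P (fun i => t * v i) by field; lra.
lra.
Qed.

Definition zvec n : vec n := fun _ => 0.
Arguments zvec : clear implicits.

Definition abs_hyp n q (isz : 'I_n -> bool) (D : vec n -> Prop) (g : 'I_q -> vec n -> R) :=
  [/\ (forall d, D d -> zero_on_z isz d),
      D (zvec n),
      (forall d1 d2, D d1 -> D d2 -> D (vadd d1 d2)),
      (forall t d, 0 <= t -> D d -> D (vscale t d)) &
  [/\ (forall j s w, zero_on_z isz s -> zero_on_z isz w -> g j (vadd s w) <= g j s + g j w),
      (forall j t s, 0 < t -> zero_on_z isz s -> g j (vscale t s) = t * g j s) &
      (forall d, D d -> exists j, 0 <= g j d)]].

Lemma g_zero n q (isz : 'I_n -> bool) D (g : 'I_q -> vec n -> R) j :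
  abs_hyp isz D g -> g j (zvec n) = 0.
Proof.
move=> [_ _ _ _ [_ Hh _]].
have Hz : zero_on_z isz (zvec n) by move=> i _.
have := Hh j 2 (zvec n) ltac:(lra) Hz.
have -> : vscale 2 (zvec n) = zvec n by apply: functional_extensionality => i; rewrite /vscale /zvec; ring.
lra.
Qed.

Lemma abs_le_sum q (z : 'I_q -> R) j : Rabs (z j) <= \big[Rplus/0]_(i < q) Rabs (z i).
Proof. by apply: (@term_le_sum _ (fun i => Rabs (z i))) => i; apply: Rabs_pos. Qed.

Lemma step1 n q (isz : 'I_n -> bool) D (g : 'I_q -> vec n -> R) :
  (0 < q)%N -> abs_hyp isz D g ->
  exists sigma : 'I_q -> R, (forall i, 0 <= sigma i) /\ (exists i, sigma i <> 0) /\
    (forall d, D d -> 0 <= \big[Rplus/0]_(j < q) (sigma j * g j d)).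
Proof.
move=> Hq H; have [DS D0 Dadd Dsc [gsub ghom gst]] := H.
have g0 := fun j => @g_zero n q isz D g j H.
pose T1 (z : 'I_q -> R) := fun r => exists d, D d /\ forall j, g j d + z j <= r.
pose P1 z := Rinf (T1 z).
have LB : forall z r, T1 z r -> - (\big[Rplus/0]_(i < q) Rabs (z i)) <= r.
  move=> z r [d [Hd Hr]]; have [j Hj] := gst d Hd.
  have := Hr j; have := abs_le_sum z j; have := Rle_abs (- z j); rewrite Rabs_Ropp; lra.
have NE : forall z, T1 z (\big[Rplus/0]_(i < q) Rabs (z i)).
  move=> z; exists (zvec n); split => // j; rewrite g0.
  have := abs_le_sum z j; have := Rle_abs (z j); lra.
have Sp := fun z => Rinf_spec (NE z) (LB z).
have HP : sublin P1.
  split.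
  - move=> z w.
    have [inf1 _] := Sp (fun i => z i + w i).
    have [_ glb1] := Sp z; have [_ glb2] := Sp w.
    set A := P1 _.
    have K : forall r s, T1 z r -> T1 w s -> A <= r + s.
      move=> r s [d1 [Hd1 Hr]] [d2 [Hd2 Hs]].
      apply: inf1; exists (vadd d1 d2); split; first exact: Dadd.
      move=> j; have := gsub j _ _ (DS _ Hd1) (DS _ Hd2); have := Hr j; have := Hs j; lra.
    suff : A - P1 w <= P1 z by lra.
    apply: glb1 => r Hr.
    suff : A - r <= P1 w by lra.
    apply: glb2 => s Hs.
    have := K r s Hr Hs; lra.
  - apply: hom_from_le => t v Ht.
    have [inf1 _] := Sp (fun i => t * v i).
    have [_ glb1] := Sp v.
    suff : P1 (fun i => t * v i) / t <= P1 v.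
      move=> H1; have := Rmult_le_compat_l t _ _ (Rlt_le _ _ Ht) H1.
      have -> : t * (P1 (fun i => t * v i) / t) = P1 (fun i => t * v i) by field; lra.
      done.
    apply: glb1 => r [d [Hd Hr]].
    suff : P1 (fun i => t * v i) <= t * r.
      move=> H1; apply: (Rmult_le_reg_l t) => //.
      have -> : t * (P1 (fun i => t * v i) / t) = P1 (fun i => t * v i) by field; lra.
      done.
    apply: inf1; exists (vscale t d); split; first by apply: Dsc => //; lra.
    move=> j; rewrite ghom //; last exact: DS.
    have := Rmult_le_compat_l t _ _ (Rlt_le _ _ Ht) (Hr j); lra.
pose G0 (v : 'I_q -> R) r := exists al, v = (fun _ => al) /\ r = al.
have HG : good P1 G0.
  split.
  - by exists 0.
  - by move=> v r w s [a1 [-> ->]] [a2 [-> ->]]; exists (a1 + a2).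
  - by move=> v r t [a1 [-> ->]]; exists (t * a1).
  - move=> r [al [E ->]].
    by have := f_equal (fun h => h (Ordinal Hq)) E.
  - move=> v r [al [-> ->]].
    have [_ glb1] := Sp (fun _ => al).
    apply: glb1 => r0 [d [Hd Hr]].
    have [j Hj] := gst d Hd; have := Hr j; lra.
have [a [Ha1 Ha2]] := hb HP HG.
exists a; split; [|split].
- move=> k.
  pose z : 'I_q -> R := fun j => if j == k then -1 else 0.
  have H1 := Ha1 z.
  have E : fdot a z = - a k.
    rewrite /fdot (bigD1 k) //= /z eqxx big1 => [|i Hi]; last by rewrite (negbTE Hi); ring.
    ring.
  have H2 : P1 z <= 0.
    have [inf1 _] := Sp z; apply: inf1; exists (zvec n); split => // j.
    rewrite g0 /z; case: (j == k); lra.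
  lra.
- apply: NNPP => Hn.
  have := Ha2 (fun _ => 1) 1 ltac:(by exists 1).
  rewrite /fdot big1 => [|i _]; first lra.
  have : a i = 0 by apply: NNPP => Hi; apply: Hn; exists i.
  move=> ->; ring.
- move=> d Hd.
  have H1 := Ha1 (fun j => - g j d).
  have H2 : P1 (fun j => - g j d) <= 0.
    have [inf1 _] := Sp (fun j => - g j d); apply: inf1; exists d; split => // j; lra.
  have E : fdot a (fun j => - g j d) = - \big[Rplus/0]_(j < q) (a j * g j d).
    rewrite -sumR_opp; apply: eq_bigr => j _; ring.
  have H3 := Rle_trans _ _ _ H1 H2; rewrite E in H3; lra.
Qed.

Definition sj n q (isz : 'I_n -> bool) (s : ('I_q * 'I_n)%type -> R) (j : 'I_q) : vec n :=
  fun k => if isz k then 0 else s (j, k).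

Arguments sj {n q}.

Lemma fdot_pair n q (b s : ('I_q * 'I_n)%type -> R) :
  fdot b s = \big[Rplus/0]_(j < q) \big[Rplus/0]_(k < n) (b (j, k) * s (j, k)).
Proof.
rewrite /fdot (pair_bigA _ (fun j k => b (j, k) * s (j, k))).
by apply: eq_bigr => -[j k] _.
Qed.

Lemma step2 n q (isz : 'I_n -> bool) D (g : 'I_q -> vec n -> R) (sigma : 'I_q -> R) :
  abs_hyp isz D g -> (forall i, 0 <= sigma i) ->
  (forall d, D d -> 0 <= \big[Rplus/0]_(j < q) (sigma j * g j d)) ->
  exists u : 'I_q -> vec n, (forall j, zero_on_z isz (u j)) /\
    (forall j s, zero_on_z isz s -> dot s (u j) <= sigma j * g j s) /\
    (forall d, D d -> 0 <= \big[Rplus/0]_(j < q) dot d (u j)).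
Proof.
move=> H Hs Hk; have [DS D0 Dadd Dsc [gsub ghom gst]] := H.
have g0 := fun j => @g_zero n q isz D g j H.
have sjS : forall (s : ('I_q * 'I_n)%type -> R) (j : 'I_q), zero_on_z isz (sj isz s j).
  by move=> s j i Hi; rewrite /sj Hi.
pose T2 (s : ('I_q * 'I_n)%type -> R) := fun r => exists d, D d /\
   \big[Rplus/0]_(j < q) (sigma j * g j (vadd (sj isz s j) d)) <= r.
pose P2 s := Rinf (T2 s).
have LB : forall s r, T2 s r ->
   - (\big[Rplus/0]_(j < q) (sigma j * g j (vscale (-1) (sj isz s j)))) <= r.
  move=> s r [d [Hd Hr]].
  have H1 : \big[Rplus/0]_(j < q) (sigma j * g j d) <=
     \big[Rplus/0]_(j < q) (sigma j * g j (vadd (sj isz s j) d) +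
                            sigma j * g j (vscale (-1) (sj isz s j))).
    apply: sumR_le => j _.
    have E : d = vadd (vadd (sj isz s j) d) (vscale (-1) (sj isz s j)).
      by apply: functional_extensionality => k; rewrite /vadd /vscale; ring.
    have := gsub j (vadd (sj isz s j) d) (vscale (-1) (sj isz s j))
       (zS_add (sjS s j) (DS _ Hd)) (zS_scale (-1) (sjS s j)).
    rewrite -E => H2.
    have := Rmult_le_compat_l _ _ _ (Hs j) H2; lra.
  rewrite sumR_split in H1.
  have H3 := Hk d Hd.
  set X := \big[Rplus/0]_(j < q) (sigma j * g j (vadd (sj isz s j) d)) in Hr H1 *.
  set Y := \big[Rplus/0]_(j < q) (sigma j * g j (vscale (-1) (sj isz s j))) in H1 *.
  set Z := \big[Rplus/0]_(j < q) (sigma j * g j d) in H1 H3 *.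
  lra.
have NE : forall s, T2 s (\big[Rplus/0]_(j < q) (sigma j * g j (vadd (sj isz s j) (zvec n)))).
  by move=> s; exists (zvec n); split => //; apply: Rle_refl.
have Sp := fun s => Rinf_spec (NE s) (LB s).
have HP : sublin P2.
  split.
  - move=> s w.
    have [inf1 _] := Sp (fun i => s i + w i).
    have [_ glb1] := Sp s; have [_ glb2] := Sp w.
    set A := P2 _.
    have K : forall r r', T2 s r -> T2 w r' -> A <= r + r'.
      move=> r r' [d1 [Hd1 Hr]] [d2 [Hd2 Hr']].
      apply: inf1; exists (vadd d1 d2); split; first exact: Dadd.
      apply: Rle_trans _ (Rplus_le_compat _ _ _ _ Hr Hr').
      rewrite -sumR_split; apply: sumR_le => j _.
      have E : vadd (sj isz (fun i => s i + w i) j) (vadd d1 d2) =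
               vadd (vadd (sj isz s j) d1) (vadd (sj isz w j) d2).
        apply: functional_extensionality => k; rewrite /vadd /sj.
        case: (isz k); ring.
      rewrite E.
      have := gsub j _ _ (zS_add (sjS s j) (DS _ Hd1)) (zS_add (sjS w j) (DS _ Hd2)).
      move/(Rmult_le_compat_l _ _ _ (Hs j)); lra.
    suff : A - P2 w <= P2 s by lra.
    apply: glb1 => r Hr.
    suff : A - r <= P2 w by lra.
    apply: glb2 => r' Hr'.
    have := K r r' Hr Hr'; lra.
  - apply: hom_from_le => t v Ht.
    have [inf1 _] := Sp (fun i => t * v i).
    have [_ glb1] := Sp v.
    set A := P2 _.
    suff : A / t <= P2 v.
      move=> H1; have := Rmult_le_compat_l t _ _ (Rlt_le _ _ Ht) H1.
      have -> : t * (A / t) = A by field; lra.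
      done.
    apply: glb1 => r [d [Hd Hr]].
    suff : A <= t * r.
      move=> H1; apply: (Rmult_le_reg_l t) => //.
      have -> : t * (A / t) = A by field; lra.
      done.
    apply: inf1; exists (vscale t d); split; first by apply: Dsc => //; lra.
    apply: Rle_trans _ (Rmult_le_compat_l _ _ _ (Rlt_le _ _ Ht) Hr).
    rewrite sumR_distr; apply: Req_le; apply: eq_bigr => j _.
    have E : vadd (sj isz (fun i => t * v i) j) (vscale t d) = vscale t (vadd (sj isz v j) d).
      apply: functional_extensionality => k; rewrite /vadd /sj /vscale.
      case: (isz k); ring.
    rewrite E ghom //; last exact: zS_add (sjS v j) (DS _ Hd).
    ring.
pose G0 (v : ('I_q * 'I_n)%type -> R) r := v = (fun _ => 0) /\ r = 0.
have HG : good P2 G0.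
  split.
  - by [].
  - move=> v r w s' [-> ->] [-> ->]; split; last ring.
    by apply: functional_extensionality => i; ring.
  - move=> v r t [-> ->]; split; last ring.
    by apply: functional_extensionality => i; ring.
  - by move=> r [_ ->].
  - move=> v r [-> ->].
    have [_ glb1] := Sp (fun _ => 0).
    apply: glb1 => r0 [d [Hd Hr]].
    apply: Rle_trans (Hk d Hd) _; apply: Rle_trans _ Hr; apply: Req_le.
    apply: eq_bigr => j _.
    have -> : vadd (sj isz (fun _ => 0) j) d = d.
      by apply: functional_extensionality => k; rewrite /vadd /sj; case: (isz k); ring.
    done.
have [b [Hb1 _]] := hb HP HG.
pose u (j : 'I_q) : vec n := fun k => if isz k then 0 else b (j, k).
have dot_u : forall j s, zero_on_z isz s ->
    dot s (u j) = \big[Rplus/0]_(k < n) (b (j, k) * s k).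
  move=> j s Hs0; apply: eq_bigr => k _; rewrite /u.
  case E: (isz k); first by rewrite Hs0 //; ring.
  ring.
exists u; split; [|split].
- by move=> j k Hk'; rewrite /u Hk'.
- move=> j0 s Hs0.
  pose s' (p : ('I_q * 'I_n)%type) := if p.1 == j0 then s p.2 else 0.
  have H1 := Hb1 s'.
  have E1 : fdot b s' = dot s (u j0).
    rewrite fdot_pair dot_u // (bigD1 j0) //= [X in _ + X]big1 => [|j Hj].
      rewrite Rplus_0_r; apply: eq_bigr => k _; rewrite /s' /= eqxx; ring.
    rewrite big1 // => k _; rewrite /s' /= (negbTE Hj); ring.
  have H2 : P2 s' <= sigma j0 * g j0 s.
    have [inf1 _] := Sp s'; apply: inf1; exists (zvec n); split => //.
    rewrite (bigD1 j0) //= big1 => [|j Hj].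
      have -> : vadd (sj isz s' j0) (zvec n) = s.
        apply: functional_extensionality => k; rewrite /vadd /sj /zvec /s' /= eqxx.
        case E: (isz k); first by rewrite Hs0 //; ring.
        ring.
      lra.
    have -> : vadd (sj isz s' j) (zvec n) = zvec n.
      apply: functional_extensionality => k; rewrite /vadd /sj /zvec /s' /= (negbTE Hj).
      case: (isz k); ring.
    rewrite g0; ring.
  rewrite -E1; exact: Rle_trans H1 H2.
- move=> d Hd.
  pose s' (p : ('I_q * 'I_n)%type) := - d p.2.
  have H1 := Hb1 s'.
  have E1 : fdot b s' = - \big[Rplus/0]_(j < q) dot d (u j).
    rewrite fdot_pair -sumR_opp; apply: eq_bigr => j _.
    rewrite dot_u; last exact: DS.
    rewrite -sumR_opp; apply: eq_bigr => k _; rewrite /s' /=; ring.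
  have H2 : P2 s' <= 0.
    have [inf1 _] := Sp s'; apply: inf1; exists d; split => //.
    rewrite big1 => [|j _]; first lra.
    have -> : vadd (sj isz s' j) d = zvec n.
      apply: functional_extensionality => k; rewrite /vadd /sj /zvec /s' /=.
      case E: (isz k); last ring.
      rewrite (DS _ Hd k) //; ring.
    rewrite g0; ring.
  have := Rle_trans _ _ _ H1 H2; rewrite E1; lra.
Qed.

Lemma dot_scale n (s w : vec n) c : dot s (vscale c w) = c * dot s w.
Proof. rewrite /dot sumR_distr; apply: eq_bigr => k _; rewrite /vscale; ring. Qed.

Definition piz n (isz : 'I_n -> bool) (s : vec n) : vec n := fun k => if isz k then 0 else s k.

Lemma subgrad_exists n q (isz : 'I_n -> bool) D (g : 'I_q -> vec n -> R) j :
  abs_hyp isz D g ->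
  exists v, zero_on_z isz v /\ forall s, zero_on_z isz s -> dot s v <= g j s.
Proof.
move=> H; have [DS D0 Dadd Dsc [gsub ghom gst]] := H.
have g0 := fun j => @g_zero n q isz D g j H.
have pizS : forall s, zero_on_z isz (piz isz s) by move=> s i Hi; rewrite /piz Hi.
pose P s := g j (piz isz s).
have HP : sublin P.
  split.
  - move=> s w; rewrite /P.
    have -> : piz isz (fun i => s i + w i) = vadd (piz isz s) (piz isz w).
      by apply: functional_extensionality => k; rewrite /piz /vadd; case: (isz k); ring.
    exact: gsub.
  - move=> t s Ht; rewrite /P.
    have -> : piz isz (fun i => t * s i) = vscale t (piz isz s).
      by apply: functional_extensionality => k; rewrite /piz /vscale; case: (isz k); ring.
    exact: ghom.
pose G0 (v : vec n) r := v = (fun _ => 0) /\ r = 0.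
have HG : good P G0.
  split.
  - by [].
  - move=> v r w s' [-> ->] [-> ->]; split; last ring.
    by apply: functional_extensionality => i; ring.
  - move=> v r t [-> ->]; split; last ring.
    by apply: functional_extensionality => i; ring.
  - by move=> r [_ ->].
  - move=> v r [-> ->]; rewrite /P.
    have -> : piz isz (fun _ => 0) = zvec n.
      by apply: functional_extensionality => k; rewrite /piz /zvec; case: (isz k).
    rewrite g0; lra.
have [a [Ha _]] := hb HP HG.
exists (piz isz a); split => // s Hs.
have E1 : dot s (piz isz a) = fdot a s.
  apply: eq_bigr => k _; rewrite /piz; case E: (isz k); last ring.
  rewrite Hs //; ring.
have E2 : piz isz s = s.
  by apply: functional_extensionality => k; rewrite /piz; case E: (isz k) => //; rewrite Hs.
rewrite E1; have := Ha s; rewrite /P E2; done.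
Qed.

Lemma abstract_main n q (isz : 'I_n -> bool) D (g : 'I_q -> vec n -> R) :
  (0 < q)%N -> abs_hyp isz D g ->
  exists sigma : 'I_q -> R, (forall i, 0 <= sigma i) /\ (exists i, sigma i <> 0) /\
   exists v : 'I_q -> vec n,
    (forall j, zero_on_z isz (v j) /\ forall s, zero_on_z isz s -> dot s (v j) <= g j s) /\
    (forall d, D d -> 0 <= dot (fun k => \big[Rplus/0]_(j < q) (sigma j * v j k)) d).
Proof.
move=> Hq H; have [DS D0 Dadd Dsc [gsub ghom gst]] := H.
have [sigma [Hs [Hnz Hk]]] := step1 Hq H.
have [u [Hu0 [Hu1 Hu2]]] := step2 H Hs Hk.
have Hv : forall j, exists v, (zero_on_z isz v /\ forall s, zero_on_z isz s -> dot s v <= g j s) /\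
     forall d, zero_on_z isz d -> sigma j * dot d v = dot d (u j).
  move=> j.
  case: (Rle_lt_or_eq_dec _ _ (Hs j)) => [Hpos|Hzero].
  - exists (vscale (/ sigma j) (u j)); split; [split|].
    + exact: zS_scale.
    + move=> s Hs0; rewrite dot_scale.
      have := Hu1 j s Hs0.
      move/(Rmult_le_compat_l _ _ _ (Rlt_le _ _ (Rinv_0_lt_compat _ Hpos))).
      have -> : / sigma j * (sigma j * g j s) = g j s by field; lra.
      done.
    + move=> d Hd; rewrite dot_scale; field; lra.
  - have [v [Hv0 Hv1]] := @subgrad_exists n q isz D g j H.
    exists v; split; first by split.
    move=> d Hd; rewrite -Hzero Rmult_0_l.
    have H1 := Hu1 j d Hd; have H2 := Hu1 j (vscale (-1) d) (zS_scale (-1) Hd).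
    have E : dot (vscale (-1) d) (u j) = - dot d (u j).
      rewrite /dot -sumR_opp; apply: eq_bigr => k _; rewrite /vscale; ring.
    rewrite E -Hzero in H2; rewrite -Hzero in H1; lra.
have [v Hvf] := functional_choice _ Hv.
exists sigma; split => //; split => //; exists v; split; first by move=> j; case: (Hvf j).
move=> d Hd; apply: Rle_trans (Hu2 d Hd) _; apply: Req_le.
rewrite /dot.
have -> : \big[Rplus/0]_(k < n) (\big[Rplus/0]_(j < q) (sigma j * v j k) * d k) =
          \big[Rplus/0]_(k < n) \big[Rplus/0]_(j < q) (sigma j * v j k * d k).
  by apply: eq_bigr => k _; rewrite big_distrl.
rewrite [RHS]exchange_big; apply: eq_bigr => j _.
have := (proj2 (Hvf j)) d (DS _ Hd); rewrite /dot => <-.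
rewrite sumR_distr; apply: eq_bigr => k _; ring.
Qed.

Unset Implicit Arguments.

Theorem mainTheorem3 (n q : nat) (isz : 'I_n -> bool) (l u : vec n)
  (f : 'I_q -> vec n -> R) (xs : vec n) :
  (0 < n)%nat -> (0 < q)%nat ->
  (exists i, isz i) -> (exists i, ~~ isz i) ->
  (forall i, l i < u i) ->
  (forall i, isz i -> (exists k : Z, l i = IZR k) /\ (exists k : Z, u i = IZR k)) ->
  (forall j, lipschitz_c isz (f j)) ->
  inX l u xs -> inZ isz xs ->
  pareto_clarke_jahn_stationary_c isz l u f xs ->
  pareto_clarke_stationary_c isz l u f xs.
Proof.
move=> _ Hq _ _ _ _ Hlip _ _ Hst.
pose g (j : 'I_q) (s : vec n) := gval isz (f j) xs s.
have Hfin : forall j s, zero_on_z isz s -> clarke_c isz (f j) xs s = Rbar.Finite (g j s).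
  by move=> j s Hs; have [-> _] := clarke_char xs (Hlip j) Hs.
have H : abs_hyp isz (Dc isz l u xs) g.
  split.
  - by move=> d Hd i Hi; exact: (proj1 (Hd i) Hi).
  - move=> i; rewrite /zvec; split; first by []. by move=> _; split => _; lra.
  - move=> d1 d2 H1 H2 i; have [a1 b1] := H1 i; have [a2 b2] := H2 i.
    rewrite /vadd; split; first by move=> Hi; rewrite a1 // a2 //; ring.
    move=> Hi; have [e1 f1] := b1 Hi; have [e2 f2] := b2 Hi.
    split => E.
    + have := e1 E; have := e2 E; lra.
    + have := f1 E; have := f2 E; lra.
  - move=> t d Ht H1 i; have [a1 b1] := H1 i.
    rewrite /vscale; split; first by move=> Hi; rewrite a1 //; ring.
    move=> Hi; have [e1 f1] := b1 Hi.
    split => E.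
    + have := e1 E; nra.
    + have := f1 E; nra.
  - split.
    + move=> j s w Hs Hw; exact: g_sub.
    + move=> j t s Ht Hs; exact: g_hom.
    + move=> d Hd; have [j Hj] := Hst d Hd; exists j.
      have Hds : zero_on_z isz d by move=> i Hi; exact: (proj1 (Hd i) Hi).
      have := Rbar_le_trans _ _ _ Hj (cj_le_clarke isz l u (f j) xs d).
      by rewrite Hfin.
have [sigma [Hs [Hnz [v [Hv Hd]]]]] := abstract_main Hq H.
exists sigma; split => //; split => //.
exists v, (fun k => \big[Rplus/0]_(j < q) (sigma j * v j k)); split; [|split].
- move=> j; have [Hv0 Hv1] := Hv j; split => // s Hs0.
  rewrite Hfin //; exact: Hv1.
- by [].
- exact: Hd.
Qed.
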